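(* Assume the Green's functions $G_N[2T]$, $G_N[T]$, $G_{M_1}[T]$ exist. Let $\sigma_1,\sigma_2\in L^1(I)$, let $u_N$ be the unique solution of $Lu=\sigma_1$ a.e. on $I$, $u\in X_{N,T}$, and $u_{M_1}$ the unique solution of $Lu=\sigma_2$ a.e. on $I$, $u\in X_{M_1,T}$. Then: 1. If $G_N[2T]\ge0$ on $J\times J$ and $|\sigma_2(t)|\le\sigma_1(t)$ for a.e. $t\in I$, then $|u_{M_1}(t)|\le u_N(t)$ for all $t\in I$. 2. If $G_N[2T]\le0$ on $J\times J$ and $0\le\sigma_2(t)\le\sigma_1(t)$ for a.e. $t\in I$, then $u_N(t)\le0$ and $u_N(t)\le u_{M_1}(t)$ for all $t\in I$. 3. If $G_N[2T]\le0$ on $J\times J$ and $\sigma_1(t)\le\sigma_2(t)\le0$ for a.e. $t\in I$, then $u_N(t)\ge0$ and $u_{M_1}(t)\le u_N(t)$ for all $t\in I$.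
   Context: Fix $n\ge 1$, $T>0$, $I=[0,T]$, $J=[0,2T]$. $W^{2n,1}(K)$: $u\in C^{2n-1}(K)$ with $u^{(2n-1)}$ absolutely continuous. Let $a_0,\dots,a_{2n-1}\in L^\alpha(I)$, $\alpha\ge1$, $Lu=u^{(2n)}+\sum_{k=0}^{2n-1}a_ku^{(k)}$ on $I$. $\widetilde L u=u^{(2n)}+\sum_{k=0}^{n-1}(\hat a_{2k+1}u^{(2k+1)}+\tilde a_{2k}u^{(2k)})$ on $J$, where $\tilde a_{2k}=a_{2k}$, $\hat a_{2k+1}=a_{2k+1}$ on $I$, and $\tilde a_{2k}(t)=a_{2k}(2T-t)$, $\hat a_{2k+1}(t)=-a_{2k+1}(2T-t)$ for $t\in(T,2T]$. An operator $M$ is nonresonant in $X$ if $Mu=0$ a.e., $u\in X$ forces $u\equiv0$; its Green's function $G$ then gives the unique solution $u(t)=\int G(t,s)\sigma(s)ds$ of $Mu=\sigma$, $u\in X$. $X_{N,T}=\{u\in W^{2n,1}(I): u^{(2k+1)}(0)=u^{(2k+1)}(T)=0,\ k=0,\dots,n-1\}$ and $X_{M_1,T}=\{u\in W^{2n,1}(I): u^{(2k+1)}(0)=u^{(2k)}(T)=0,\ k=0,\dots,n-1\}$; $G_N[T]$, $G_{M_1}[T]$ are the Green's functions of $L$ on these spaces. $G_N[2T]$: Green's function of $\widetilde L$ on $\{u\in W^{2n,1}(J): u^{(2k+1)}(0)=u^{(2k+1)}(2T)=0,\ k=0,\dots,n-1\}$. *)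

(* Defs.v *)
From Stdlib Require Import Reals Lra.
Open Scope R_scope.

Fixpoint fsum (m : nat) (f : nat -> R) : R :=
  match m with O => 0 | S m' => fsum m' f + f m' end.

Definition null (A : R -> Prop) : Prop :=
  forall eps, 0 < eps ->
  exists l r : nat -> R,
    (forall k, l k <= r k) /\
    (forall x, A x -> exists k, l k < x < r k) /\
    (forall N, sum_f_R0 (fun k => r k - l k) N <= eps).

Definition ae (a b : R) (P : R -> Prop) : Prop :=
  null (fun x => a <= x <= b /\ ~ P x).

Definition ind (p q x : R) : R :=
  if Rle_dec p x then (if Rlt_dec x q then 1 else 0) else 0.

(* Lebesgue integral on [a,b] (Mikusinski): f has integral I iff
   f = sum c_k 1_[p_k,q_k) a.e. wherever the series converges absolutely,
   with sum |c_k|(q_k-p_k) < oo and I = sum c_k (q_k - p_k). *)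
Definition has_integral (a b : R) (f : R -> R) (I : R) : Prop :=
  exists c p q : nat -> R,
    (forall k, a <= p k /\ p k <= q k /\ q k <= b) /\
    (exists S, infinite_sum (fun k => Rabs (c k) * (q k - p k)) S) /\
    infinite_sum (fun k => c k * (q k - p k)) I /\
    ae a b (fun x =>
      (exists S, infinite_sum (fun k => Rabs (c k) * ind (p k) (q k) x) S) ->
      infinite_sum (fun k => c k * ind (p k) (q k) x) (f x)).

Definition L1 (a b : R) (f : R -> R) : Prop := exists I, has_integral a b f I.

Definition is_step (a b : R) (phi : R -> R) : Prop :=
  exists (N : nat) (c p q : nat -> R),
    (forall k, a <= p k /\ p k <= q k /\ q k <= b) /\
    forall x, phi x = fsum N (fun k => c k * ind (p k) (q k) x).

Definition measurable (a b : R) (f : R -> R) : Prop :=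
  exists phi : nat -> R -> R,
    (forall n, is_step a b (phi n)) /\
    ae a b (fun x => Un_cv (fun n => phi n x) (f x)).

(* x^al for x >= 0 (with 0^al = 0, al >= 1) *)
Definition rpow (x al : R) : R :=
  if Rlt_dec 0 x then Rpower x al else 0.

Definition Lp (al a b : R) (f : R -> R) : Prop :=
  measurable a b f /\ L1 a b (fun t => rpow (Rabs (f t)) al).

Definition deriv_within (a b : R) (f : R -> R) (x l : R) : Prop :=
  forall eps, 0 < eps -> exists delta, 0 < delta /\
    forall y, a <= y <= b -> y <> x -> Rabs (y - x) < delta ->
      Rabs ((f y - f x) / (y - x) - l) < eps.

Definition abs_cont (a b : R) (f : R -> R) : Prop :=
  forall eps, 0 < eps -> exists delta, 0 < delta /\
    forall (N : nat) (x y : nat -> R),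
      (forall k, (k <= N)%nat -> a <= x k /\ x k <= y k /\ y k <= b) ->
      (forall i j, (i < j <= N)%nat -> y i <= x j) ->
      sum_f_R0 (fun k => y k - x k) N < delta ->
      sum_f_R0 (fun k => Rabs (f (y k) - f (x k))) N < eps.

(* D k = k-th derivative (k = 0..m-1) of D 0 on [a,b], D (m-1) absolutely
   continuous: i.e. D 0 in W^{m,1}(a,b) with derivatives D k *)
Definition Wfam (a b : R) (m : nat) (D : nat -> R -> R) : Prop :=
  (forall k x, (S k < m)%nat -> a <= x <= b ->
      deriv_within a b (D k) x (D (S k) x)) /\
  abs_cont a b (D (pred m)).

Definition solves (a b : R) (m : nat) (c : nat -> R -> R)
    (D : nat -> R -> R) (sigma : R -> R) : Prop :=
  ae a b (fun t => exists d, deriv_within a b (D (pred m)) t d /\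
            d + fsum m (fun k => c k t * D k t) = sigma t).

Definition N_bc (n : nat) (a b : R) (D : nat -> R -> R) : Prop :=
  forall k, (k < n)%nat -> D (2 * k + 1)%nat a = 0 /\ D (2 * k + 1)%nat b = 0.

Definition M1_bc (n : nat) (a b : R) (D : nat -> R -> R) : Prop :=
  forall k, (k < n)%nat -> D (2 * k + 1)%nat a = 0 /\ D (2 * k)%nat b = 0.

Definition is_sol (n : nat) (a b : R) (c : nat -> R -> R)
    (bc : (nat -> R -> R) -> Prop) (sigma u : R -> R) : Prop :=
  exists D : nat -> R -> R,
    (forall x, a <= x <= b -> D O x = u x) /\
    Wfam a b (2 * n) D /\ bc D /\ solves a b (2 * n) c D sigma.

Definition nonresonant (n : nat) (a b : R) (c : nat -> R -> R)
    (bc : (nat -> R -> R) -> Prop) : Prop :=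
  forall u, is_sol n a b c bc (fun _ => 0) u -> forall t, a <= t <= b -> u t = 0.

Definition Green (n : nat) (a b : R) (c : nat -> R -> R)
    (bc : (nat -> R -> R) -> Prop) (G : R -> R -> R) : Prop :=
  nonresonant n a b c bc /\
  forall sigma, L1 a b sigma ->
    exists u, is_sol n a b c bc sigma u /\
      forall t, a <= t <= b -> has_integral a b (fun s => G t s * sigma s) (u t).

Definition refl_coef (T : R) (c : nat -> R -> R) (k : nat) (t : R) : R :=
  if Rle_dec t T then c k t
  else if Nat.even k then c k (2 * T - t) else - c k (2 * T - t).

(* Main.v *)
From Coquelicot Require Import Coquelicot.
From Stdlib Require Import Reals Lra Lia Arith Classical.
Require Import Defs.
Open Scope R_scope.

Lemma fsum_S f N : sum_f_R0 f N = fsum (S N) f.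
Proof. induction N; simpl; [ring|rewrite IHN; simpl; ring]. Qed.

Lemma fsum_ext m f g : (forall k, (k < m)%nat -> f k = g k) -> fsum m f = fsum m g.
Proof. induction m; intros H; simpl; auto. rewrite IHm, H; auto; intros; apply H; lia. Qed.

Lemma fsum_plus m f g : fsum m (fun k => f k + g k) = fsum m f + fsum m g.
Proof. induction m; simpl; [ring|rewrite IHm; ring]. Qed.

Lemma fsum_scal m a f : fsum m (fun k => a * f k) = a * fsum m f.
Proof. induction m; simpl; [ring|rewrite IHm; ring]. Qed.

Lemma fsum_le m f g : (forall k, (k < m)%nat -> f k <= g k) -> fsum m f <= fsum m g.
Proof. induction m; intros H; simpl; [lra|]. assert (f m <= g m) by (apply H; lia).
 assert (fsum m f <= fsum m g) by (apply IHm; intros; apply H; lia). lra. Qed.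

Lemma fsum_nonneg m f : (forall k, 0 <= f k) -> 0 <= fsum m f.
Proof. intros H; induction m; simpl; [lra|]. specialize (H m); lra. Qed.

Lemma fsum_mono m m' f : (forall k, 0 <= f k) -> (m <= m')%nat -> fsum m f <= fsum m' f.
Proof. intros H Hm; induction Hm; simpl; [lra|]. specialize (H m0); lra. Qed.

Lemma fsum_abs m f : Rabs (fsum m f) <= fsum m (fun k => Rabs (f k)).
Proof. induction m; simpl. rewrite Rabs_R0; lra.
 eapply Rle_trans; [apply Rabs_triang|]. lra. Qed.

Lemma fsum_split m n f : fsum (m + n) f = fsum m f + fsum n (fun k => f (m + k)%nat).
Proof. induction n; simpl. rewrite Nat.add_0_r; ring. rewrite Nat.add_succ_r; simpl; rewrite IHn; ring. Qed.

Definition conv (f : nat -> R) (S : R) : Prop :=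
  forall eps, 0 < eps -> exists N, forall K, (N <= K)%nat -> Rabs (fsum K f - S) < eps.

Lemma inf_conv f S : infinite_sum f S <-> conv f S.
Proof. split; intros H eps He; destruct (H eps He) as [N HN].
 - exists (Datatypes.S N); intros K HK. destruct K; [lia|]. rewrite <- fsum_S. apply HN; lia.
 - exists N; intros n Hn. unfold Rdist. rewrite fsum_S. apply HN; lia. Qed.

Lemma conv_ext f g S : (forall k, f k = g k) -> conv f S -> conv g S.
Proof. intros E H eps He; destruct (H eps He) as [N HN]; exists N; intros K HK.
 rewrite (fsum_ext K g f) by (intros; auto). auto. Qed.

Lemma conv_plus f g S1 S2 : conv f S1 -> conv g S2 -> conv (fun k => f k + g k) (S1 + S2).
Proof. intros H1 H2 eps He. destruct (H1 (eps/2)) as [N1 HN1]; [lra|].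
 destruct (H2 (eps/2)) as [N2 HN2]; [lra|]. exists (N1 + N2)%nat; intros K HK.
 rewrite fsum_plus. specialize (HN1 K ltac:(lia)). specialize (HN2 K ltac:(lia)).
 replace (fsum K f + fsum K g - (S1 + S2)) with ((fsum K f - S1) + (fsum K g - S2)) by ring.
 eapply Rle_lt_trans; [apply Rabs_triang|]. lra. Qed.

Lemma conv_scal a f S : conv f S -> conv (fun k => a * f k) (a * S).
Proof. intros H eps He. destruct (H (eps / (Rabs a + 1))) as [N HN].
 { apply Rdiv_lt_0_compat; [lra|]. pose proof (Rabs_pos a); lra. }
 exists N; intros K HK. rewrite fsum_scal. specialize (HN K HK).
 replace (a * fsum K f - a * S) with (a * (fsum K f - S)) by ring. rewrite Rabs_mult.
 pose proof (Rabs_pos a). pose proof (Rabs_pos (fsum K f - S)).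
 assert (Rabs (fsum K f - S) * (Rabs a + 1) < eps).
 { apply (Rmult_lt_compat_r (Rabs a + 1)) in HN; [|lra].
   unfold Rdiv in HN; rewrite Rmult_assoc, Rinv_l in HN; lra. }
 nra. Qed.

Lemma conv_zero f : (forall k, f k = 0) -> conv f 0.
Proof. intros H eps He; exists O; intros K _. rewrite (fsum_ext K f (fun _ => 0)) by auto.
 replace (fsum K (fun _ => 0)) with 0. rewrite Rminus_0_r, Rabs_R0; lra.
 induction K; simpl; auto; rewrite <- IHK; ring. Qed.

Lemma conv_unique f S1 S2 : conv f S1 -> conv f S2 -> S1 = S2.
Proof. intros H1 H2. destruct (Req_dec S1 S2) as [e|n]; auto. exfalso.
 assert (P : 0 < Rabs (S1 - S2)) by (apply Rabs_pos_lt; lra).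
 destruct (H1 _ (Rdiv_lt_0_compat _ 2 P ltac:(lra))) as [N1 HN1].
 destruct (H2 _ (Rdiv_lt_0_compat _ 2 P ltac:(lra))) as [N2 HN2].
 specialize (HN1 (N1 + N2)%nat ltac:(lia)). specialize (HN2 (N1 + N2)%nat ltac:(lia)).
 pose proof (Rabs_triang (-(fsum (N1+N2) f - S1)) (fsum (N1+N2) f - S2)). rewrite Rabs_Ropp in H.
 replace (-(fsum (N1+N2) f - S1) + (fsum (N1+N2) f - S2)) with (S1 - S2) in H by ring. lra. Qed.

Lemma conv_le f S B : conv f S -> (forall K, fsum K f <= B) -> S <= B.
Proof. intros H HB. destruct (Rle_dec S B) as [|n]; auto. exfalso.
 destruct (H (S - B)) as [N HN]; [lra|]. specialize (HN N (le_n _)). specialize (HB N).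
 apply Rabs_def2 in HN. lra. Qed.

Lemma conv_ge f S B : conv f S -> (forall K, B <= fsum K f) -> B <= S.
Proof. intros H HB. destruct (Rle_dec B S) as [|n]; auto. exfalso.
 destruct (H (B - S)) as [N HN]; [lra|]. specialize (HN N (le_n _)). specialize (HB N).
 apply Rabs_def2 in HN. lra. Qed.

Lemma conv_nonneg_le f S K : (forall k, 0 <= f k) -> conv f S -> fsum K f <= S.
Proof. intros P H. cut (0 <= S - fsum K f). lra. apply (conv_ge (fun k => f (K + k)%nat) (S - fsum K f)).
 - intros eps He. destruct (H eps He) as [N HN]. exists N. intros K' HK'.
   specialize (HN (K + K')%nat ltac:(lia)). rewrite fsum_split in HN.
   replace (fsum K' (fun k => f (K + k)%nat) - (S - fsum K f)) with (fsum K f + fsum K' (fun k => f (K + k)%nat) - S) by ring. auto.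
 - intros; apply fsum_nonneg; auto. Qed.

Lemma conv_bounded f B : (forall k, 0 <= f k) -> (forall K, fsum K f <= B) -> exists S, conv f S.
Proof. intros P HB. destruct (growing_cv (fun n => fsum n f)) as [l Hl].
 - intro n; simpl. specialize (P n); lra.
 - exists B. intros x [n ->]. auto.
 - exists l. intros eps He. destruct (Hl eps He) as [N HN]. exists N. intros K HK. apply HN; lia. Qed.

Definition inter (f g : nat -> R) (k : nat) : R :=
  if Nat.even k then f (Nat.div2 k) else g (Nat.div2 k).

Lemma even_double m : Nat.even (2 * m) = true.
Proof. rewrite Nat.even_mul; reflexivity. Qed.
Lemma even_sdouble m : Nat.even (S (2 * m)) = false.
Proof. rewrite Nat.even_succ, <- Nat.negb_even, even_double; reflexivity. Qed.

Lemma inter_even f g m : inter f g (2 * m) = f m.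
Proof. unfold inter; rewrite even_double, Nat.div2_double; auto. Qed.
Lemma inter_odd f g m : inter f g (S (2 * m)) = g m.
Proof. unfold inter; rewrite even_sdouble, Nat.div2_succ_double; auto. Qed.

Lemma fsum_succ m f : fsum (S m) f = fsum m f + f m.
Proof. reflexivity. Qed.

Lemma fsum_inter f g m : fsum (2 * m) (inter f g) = fsum m f + fsum m g
  /\ fsum (S (2 * m)) (inter f g) = fsum (S m) f + fsum m g.
Proof. induction m. simpl; unfold inter; simpl; split; ring.
 destruct IHm as [H1 H2]. replace (2 * S m)%nat with (S (S (2 * m))) by lia. split.
 - rewrite fsum_succ, H2, inter_odd, !fsum_succ; ring.
 - rewrite fsum_succ. replace (S (S (2 * m))) with (2 * S m)%nat by lia. rewrite inter_even.
   replace (2 * S m)%nat with (S (S (2 * m))) by lia. rewrite fsum_succ, H2, inter_odd, !fsum_succ; ring. Qed.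

Lemma conv_inter f g S1 S2 : conv f S1 -> conv g S2 -> conv (inter f g) (S1 + S2).
Proof. intros H1 H2 eps He. destruct (H1 (eps/2)) as [N1 HN1]; [lra|].
 destruct (H2 (eps/2)) as [N2 HN2]; [lra|]. exists (2 * (N1 + N2))%nat; intros K HK.
 destruct (Nat.Even_or_Odd K) as [[m ->]|[m ->]].
 - rewrite (proj1 (fsum_inter f g m)).
   specialize (HN1 m ltac:(lia)); specialize (HN2 m ltac:(lia)).
   replace (fsum m f + fsum m g - (S1 + S2)) with ((fsum m f - S1) + (fsum m g - S2)) by ring.
   eapply Rle_lt_trans; [apply Rabs_triang|]. lra.
 - replace (2 * m + 1)%nat with (S (2 * m)) by lia. rewrite (proj2 (fsum_inter f g m)).
   specialize (HN1 (S m) ltac:(lia)); specialize (HN2 m ltac:(lia)).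
   replace (fsum (S m) f + fsum m g - (S1 + S2)) with ((fsum (S m) f - S1) + (fsum m g - S2)) by ring.
   eapply Rle_lt_trans; [apply Rabs_triang|]. lra. Qed.

Lemma fsum_inter_le f g K : (forall k, 0 <= f k) -> (forall k, 0 <= g k) ->
  fsum K (inter f g) <= fsum K f + fsum K g.
Proof. intros Pf Pg. assert (Pi : forall k, 0 <= inter f g k) by (intro k; unfold inter; destruct Nat.even; auto).
 eapply Rle_trans. apply (fsum_mono K (2 * K) _ Pi); lia. rewrite (proj1 (fsum_inter f g K)). lra. Qed.

Lemma fsum_inter_ge_l f g m : (forall k, 0 <= g k) -> fsum m f <= fsum (2 * m) (inter f g).
Proof. intros P. rewrite (proj1 (fsum_inter f g m)). pose proof (fsum_nonneg m g P). lra. Qed.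
Lemma fsum_inter_ge_r f g m : (forall k, 0 <= f k) -> fsum m g <= fsum (2 * m) (inter f g).
Proof. intros P. rewrite (proj1 (fsum_inter f g m)). pose proof (fsum_nonneg m f P). lra. Qed.

Lemma null_subset (A B : R -> Prop) : (forall x, A x -> B x) -> null B -> null A.
Proof. intros H N eps He. destruct (N eps He) as (l & r & H1 & H2 & H3). exists l, r; repeat split; auto. Qed.

Lemma null_union (A B : R -> Prop) : null A -> null B -> null (fun x => A x \/ B x).
Proof. intros NA NB eps He. destruct (NA (eps/2)) as (l1 & r1 & H1 & H2 & H3); [lra|].
 destruct (NB (eps/2)) as (l2 & r2 & G1 & G2 & G3); [lra|].
 exists (inter l1 l2), (inter r1 r2). split; [|split].
 - intro k; unfold inter; destruct Nat.even; auto.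
 - intros x [Ax|Bx].
   + destruct (H2 x Ax) as [k Hk]. exists (2 * k)%nat. rewrite !inter_even; auto.
   + destruct (G2 x Bx) as [k Hk]. exists (S (2 * k)). rewrite !inter_odd; auto.
 - intro N. rewrite fsum_S.
   rewrite (fsum_ext _ _ (inter (fun k => r1 k - l1 k) (fun k => r2 k - l2 k))) by (intros k _; unfold inter; destruct Nat.even; auto).
   eapply Rle_trans; [apply fsum_inter_le|].
   + intro k; specialize (H1 k); lra.
   + intro k; specialize (G1 k); lra.
   + specialize (H3 N); specialize (G3 N); rewrite fsum_S in H3, G3; lra. Qed.

Lemma half_sum N : sum_f_R0 (pow (1/2)) N <= 2.
Proof. rewrite tech3 by lra. pose proof (pow_le (1/2) (S N) ltac:(lra)).
 apply (Rmult_le_reg_r (1 - 1/2)); [lra|]. unfold Rdiv at 1. rewrite Rmult_assoc, Rinv_l by lra. lra. Qed.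

Lemma null_seq (z : nat -> R) : null (fun x => exists k, x = z k).
Proof. intros eps He. exists (fun k => z k - eps/4 * (1/2)^k), (fun k => z k + eps/4 * (1/2)^k).
 split; [|split].
 - intro k; assert (0 < eps/4 * (1/2)^k) by (apply Rmult_lt_0_compat; [lra|apply pow_lt; lra]); lra.
 - intros x [k ->]; exists k; assert (0 < eps/4 * (1/2)^k) by (apply Rmult_lt_0_compat; [lra|apply pow_lt; lra]); lra.
 - intro N. rewrite (sum_eq _ (fun i => (1/2)^i * (eps/2))) by (intros; field).
   rewrite <- scal_sum. pose proof (half_sum N). apply Rle_trans with (eps/2*2); [apply Rmult_le_compat_l; lra|lra]. Qed.

Lemma null_reflect (A : R -> Prop) c : null A -> null (fun x => A (c - x)).
Proof. intros NA eps He. destruct (NA eps He) as (l & r & H1 & H2 & H3).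
 exists (fun k => c - r k), (fun k => c - l k). split; [|split].
 - intro k; specialize (H1 k); lra.
 - intros x Ax; destruct (H2 _ Ax) as [k Hk]; exists k; lra.
 - intro N. rewrite (sum_eq _ (fun k => r k - l k)) by (intros; ring). auto. Qed.

Lemma ae_mono a b (P Q : R -> Prop) : ae a b P -> (forall x, a <= x <= b -> P x -> Q x) -> ae a b Q.
Proof. intros H I. eapply null_subset; [|exact H]. intros x [Hx nQ]; split; auto. Qed.

Lemma ae_and a b P Q : ae a b P -> ae a b Q -> ae a b (fun x => P x /\ Q x).
Proof. intros HP HQ. eapply null_subset; [|exact (null_union _ _ HP HQ)].
 intros x [Hx nPQ]. destruct (classic (P x)) as [p|np].
 - right; split; auto.
 - left; auto. Qed.

Lemma RI_plus f g a b I J : is_RInt f a b I -> is_RInt g a b J -> is_RInt (fun x => f x + g x) a b (I + J).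
Proof. intros. exact (is_RInt_plus f g a b I J H H0). Qed.
Lemma RI_scal f a b k I : is_RInt f a b I -> is_RInt (fun x => k * f x) a b (k * I).
Proof. intros. exact (is_RInt_scal f a b k I H). Qed.
Lemma RI_const a b v : is_RInt (fun _ => v) a b ((b - a) * v).
Proof. exact (is_RInt_const a b v). Qed.
Lemma RI_Chasles f a b c I J : is_RInt f a b I -> is_RInt f b c J -> is_RInt f a c (I + J).
Proof. intros. exact (is_RInt_Chasles f a b c I J H H0). Qed.
Lemma RI_ext (f g : R -> R) a b (I : R) : a <= b -> (forall x, a < x < b -> f x = g x) -> is_RInt f a b I -> is_RInt g a b I.
Proof. intros Hab E H. eapply is_RInt_ext; [|exact H]. rewrite Rmin_left, Rmax_right by lra. auto. Qed.
Lemma RI_fsum a b K (phi : nat -> R -> R) (v : nat -> R) :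
  (forall k, is_RInt (phi k) a b (v k)) -> is_RInt (fun x => fsum K (fun k => phi k x)) a b (fsum K v).
Proof. intros H. induction K; simpl.
 - pose proof (RI_const a b 0) as H0; rewrite Rmult_0_r in H0; exact H0.
 - apply RI_plus; auto. Qed.

Definition clampv (a b z : R) := Rmax a (Rmin z b).

Lemma RI_interval a b l r (phi : R -> R) : a <= b -> l <= r ->
  (forall x, l < x < r -> phi x = 1) -> (forall x, x < l \/ r < x -> phi x = 0) ->
  is_RInt phi a b (clampv a b r - clampv a b l).
Proof. intros Hab Hlr H1 H0. unfold clampv.
 set (L := Rmax a (Rmin l b)). set (Rr := Rmax a (Rmin r b)).
 assert (aL : a <= L) by apply Rmax_l.
 assert (LR : L <= Rr). { unfold L, Rr, Rmax, Rmin; repeat destruct Rle_dec; lra. }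
 assert (Rb : Rr <= b). { unfold Rr, Rmax, Rmin; repeat destruct Rle_dec; lra. }
 replace (Rr - L) with ((L - a) * 0 + (Rr - L) * 1 + (b - Rr) * 0) by ring.
 apply RI_Chasles with Rr; [apply RI_Chasles with L|].
 - apply (RI_ext (fun _ => 0)); auto; [|apply RI_const].
   intros x Hx; symmetry; apply H0; left. revert Hx; unfold L, Rmax, Rmin; repeat destruct Rle_dec; lra.
 - apply (RI_ext (fun _ => 1)); auto; [|apply RI_const].
   intros x Hx; symmetry; apply H1. revert Hx; unfold L, Rr, Rmax, Rmin; repeat destruct Rle_dec; lra.
 - apply (RI_ext (fun _ => 0)); auto; [|apply RI_const].
   intros x Hx; symmetry; apply H0; right. revert Hx; unfold Rr, Rmax, Rmin; repeat destruct Rle_dec; lra. Qed.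

Lemma clamp_le a b l r : a <= b -> l <= r -> 0 <= clampv a b r - clampv a b l <= r - l.
Proof. intros; unfold clampv, Rmax, Rmin; repeat destruct Rle_dec; lra. Qed.
Lemma clamp_eq a b l r : a <= l -> l <= r -> r <= b -> clampv a b r - clampv a b l = r - l.
Proof. intros; unfold clampv, Rmax, Rmin; repeat destruct Rle_dec; lra. Qed.

Definition oind (l r x : R) : R := if Rlt_dec l x then (if Rlt_dec x r then 1 else 0) else 0.
Definition cind (l r x : R) : R := if Rle_dec l x then (if Rle_dec x r then 1 else 0) else 0.

Lemma oind_RI a b l r : a <= b -> l <= r -> is_RInt (oind l r) a b (clampv a b r - clampv a b l).
Proof. intros; apply RI_interval; auto; intros x Hx; unfold oind; repeat destruct Rlt_dec; lra. Qed.
Lemma cind_RI a b l r : a <= b -> l <= r -> is_RInt (cind l r) a b (clampv a b r - clampv a b l).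
Proof. intros; apply RI_interval; auto; intros x Hx; unfold cind; repeat destruct Rle_dec; lra. Qed.

Definition locge (g : R -> R) := forall x, exists tau, 0 < tau /\ forall y, Rabs (y - x) < tau -> g x <= g y.

Lemma locge_fsum K (g : nat -> R -> R) : (forall k, locge (g k)) -> locge (fun x => fsum K (fun k => g k x)).
Proof. intros H. induction K; intro x; simpl.
 - exists 1; split; [lra|]; intros; lra.
 - destruct (IHK x) as [t1 [P1 H1]]. destruct (H K x) as [t2 [P2 H2]].
   exists (Rmin t1 t2); split; [apply Rmin_glb_lt; auto|]. intros y Hy.
   assert (Rabs (y - x) < t1) by (eapply Rlt_le_trans; [exact Hy|apply Rmin_l]).
   assert (Rabs (y - x) < t2) by (eapply Rlt_le_trans; [exact Hy|apply Rmin_r]).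
   specialize (H1 y H0); specialize (H2 y H3); lra. Qed.

Lemma locge_plus g h : locge g -> locge h -> locge (fun x => g x + h x).
Proof. intros G H x. destruct (G x) as [t1 [P1 H1]]. destruct (H x) as [t2 [P2 H2]].
   exists (Rmin t1 t2); split; [apply Rmin_glb_lt; auto|]. intros y Hy.
   assert (Rabs (y - x) < t1) by (eapply Rlt_le_trans; [exact Hy|apply Rmin_l]).
   assert (Rabs (y - x) < t2) by (eapply Rlt_le_trans; [exact Hy|apply Rmin_r]).
   specialize (H1 y H0); specialize (H2 y H3); lra. Qed.

Lemma locge_oind d l r : 0 <= d -> locge (fun x => d * oind l r x).
Proof. intros Hd x. unfold oind. destruct (Rlt_dec l x); [destruct (Rlt_dec x r)|].
 - exists (Rmin (x - l) (r - x)); split; [apply Rmin_glb_lt; lra|]. intros y Hy.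
   assert (Rabs (y - x) < x - l) by (eapply Rlt_le_trans; [exact Hy|apply Rmin_l]).
   assert (Rabs (y - x) < r - x) by (eapply Rlt_le_trans; [exact Hy|apply Rmin_r]).
   apply Rabs_def2 in H; apply Rabs_def2 in H0.
   destruct (Rlt_dec l y); [destruct (Rlt_dec y r)|]; lra.
 - exists 1; split; [lra|]; intros y _. repeat destruct Rlt_dec; nra.
 - exists 1; split; [lra|]; intros y _. repeat destruct Rlt_dec; nra. Qed.

Lemma locge_neg_cind e l r : 0 <= e -> locge (fun x => - (e * cind l r x)).
Proof. intros He x. unfold cind. destruct (Rle_dec l x); [destruct (Rle_dec x r)|].
 - exists 1; split; [lra|]; intros y _. repeat destruct Rle_dec; nra.
 - exists (x - r); split; [lra|]. intros y Hy. apply Rabs_def2 in Hy.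
   repeat destruct Rle_dec; lra.
 - exists (l - x); split; [lra|]. intros y Hy. apply Rabs_def2 in Hy.
   repeat destruct Rle_dec; lra. Qed.

Lemma locge_neg_oind e l r : e <= 0 -> locge (fun x => - (e * oind l r x)).
Proof. intros He x. assert (0 <= - e) by lra. destruct (locge_oind (-e) l r H x) as [t [Pt Ht]].
 exists t; split; auto; intros y Hy; specialize (Ht y Hy); lra. Qed.

Lemma dini a b (F : nat -> R -> R) c0 : a <= b ->
  (forall K K' x, (K <= K')%nat -> F K x <= F K' x) ->
  (forall K, locge (F K)) ->
  (forall x, a <= x <= b -> exists K, c0 < F K x) ->
  exists K, forall x, a <= x <= b -> c0 < F K x.
Proof. intros Hab Mon Loc Hyp.
 set (E := fun z => a <= z <= b /\ exists K, forall x, a <= x <= z -> c0 < F K x).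
 assert (Ea : E a). { split; [lra|]. destruct (Hyp a ltac:(lra)) as [K HK]. exists K; intros x Hx.
   replace x with a by lra; auto. }
 destruct (completeness E) as [s [Hub Hlub]].
 { exists b; intros z [Hz _]; lra. } { exists a; auto. }
 assert (as_ : a <= s) by (apply Hub; auto).
 assert (sb : s <= b) by (apply Hlub; intros z [Hz _]; lra).
 destruct (Hyp s ltac:(lra)) as [Ks HKs]. destruct (Loc Ks s) as [tau [Pt Ht]].
 assert (Hz : exists z, E z /\ s - tau/2 < z).
 { apply NNPP; intro N. assert (s <= s - tau/2); [|lra]. apply Hlub. intros z Ez.
   destruct (Rle_dec z (s - tau/2)); auto. exfalso; apply N; exists z; split; auto; lra. }
 destruct Hz as [z [[Hz [Kz HKz]] Hzs]].
 assert (Ez' : E (Rmin b (s + tau/2))).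
 { split. { unfold Rmin; destruct Rle_dec; lra. }
   exists (Kz + Ks)%nat. intros x Hx. destruct (Rle_dec x z).
   - eapply Rlt_le_trans; [apply (HKz x); lra|apply Mon; lia].
   - eapply Rlt_le_trans; [|apply (Mon Ks); lia]. eapply Rlt_le_trans; [exact HKs|]. apply Ht.
     assert (x <= s + tau/2) by (eapply Rle_trans; [apply Hx|apply Rmin_r]).
     apply Rabs_def1; lra. }
 assert (Rmin b (s + tau / 2) <= s) by (apply Hub; auto).
 assert (Rmin b (s + tau/2) = b) by (unfold Rmin in *; destruct Rle_dec; lra).
 destruct Ez' as [_ [K HK]]. exists K. intros x Hx; apply HK; lra. Qed.

Lemma core a b (d1 l1 r1 d2 l2 r2 : nat -> R) (H : R -> R) IH S1 S2 e :
  a <= b -> (forall k, 0 <= d1 k /\ l1 k <= r1 k) -> (forall k, 0 <= d2 k /\ l2 k <= r2 k) ->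
  locge (fun x => - H x) -> is_RInt H a b IH ->
  (forall K, fsum K (fun k => d1 k * (r1 k - l1 k)) <= S1) ->
  (forall K, fsum K (fun k => d2 k * (r2 k - l2 k)) <= S2) ->
  (forall x, a <= x <= b -> exists K,
     H x - e < fsum K (fun k => d1 k * oind (l1 k) (r1 k) x) + fsum K (fun k => d2 k * oind (l2 k) (r2 k) x)) ->
  IH - e * (b - a) <= S1 + S2.
Proof. intros Hab P1 P2 LH RH B1 B2 Hyp.
 set (F := fun K x => fsum K (fun k => d1 k * oind (l1 k) (r1 k) x) + fsum K (fun k => d2 k * oind (l2 k) (r2 k) x) - H x).
 assert (Pos : forall d l r x, 0 <= d -> 0 <= d * oind l r x).
 { intros; unfold oind; repeat destruct Rlt_dec; lra. }
 destruct (dini a b F (- e) Hab) as [K HK].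
 - intros K K' x HKK'. unfold F.
   pose proof (fsum_mono K K' (fun k => d1 k * oind (l1 k) (r1 k) x) ltac:(intro k; apply Pos, P1) HKK').
   pose proof (fsum_mono K K' (fun k => d2 k * oind (l2 k) (r2 k) x) ltac:(intro k; apply Pos, P2) HKK'). lra.
 - intro K. unfold F. apply (locge_plus (fun x => _ + _) (fun x => - H x)); auto.
   apply locge_plus; apply (locge_fsum K (fun k x => _ * oind _ _ x)); intro k; apply locge_oind; [apply P1|apply P2].
 - intros x Hx. destruct (Hyp x Hx) as [K HK]. exists K. unfold F; lra.
 - assert (R1 : is_RInt (fun x => fsum K (fun k => d1 k * oind (l1 k) (r1 k) x)) a b
            (fsum K (fun k => d1 k * (clampv a b (r1 k) - clampv a b (l1 k))))).
   { apply (RI_fsum a b K (fun k x => d1 k * oind (l1 k) (r1 k) x)). intro k. apply RI_scal, oind_RI; auto. apply P1. }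
   assert (R2 : is_RInt (fun x => fsum K (fun k => d2 k * oind (l2 k) (r2 k) x)) a b
            (fsum K (fun k => d2 k * (clampv a b (r2 k) - clampv a b (l2 k))))).
   { apply (RI_fsum a b K (fun k x => d2 k * oind (l2 k) (r2 k) x)). intro k. apply RI_scal, oind_RI; auto. apply P2. }
   assert (R3 : is_RInt (fun x => H x + - e) a b (IH + (b - a) * - e)) by (apply RI_plus; auto; apply RI_const).
   pose proof (is_RInt_le _ _ a b _ _ Hab R3 (RI_plus _ _ _ _ _ _ R1 R2)) as Le.
   assert (L1 : fsum K (fun k => d1 k * (clampv a b (r1 k) - clampv a b (l1 k))) <= S1).
   { eapply Rle_trans; [|apply (B1 K)]. apply fsum_le; intros k _. destruct (P1 k).
     pose proof (clamp_le a b (l1 k) (r1 k) Hab H1). nra. }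
   assert (L2 : fsum K (fun k => d2 k * (clampv a b (r2 k) - clampv a b (l2 k))) <= S2).
   { eapply Rle_trans; [|apply (B2 K)]. apply fsum_le; intros k _. destruct (P2 k).
     pose proof (clamp_le a b (l2 k) (r2 k) Hab H1). nra. }
   assert (IH + (b - a) * - e <= fsum K (fun k => d1 k * (clampv a b (r1 k) - clampv a b (l1 k))) +
          fsum K (fun k => d2 k * (clampv a b (r2 k) - clampv a b (l2 k)))).
   { apply Le. intros x Hx. specialize (HK x ltac:(lra)). unfold F in HK. lra. }
   lra. Qed.

Definition hterm (c p q th : R) (x : R) : R :=
  if Rlt_dec c 0 then (if Rlt_dec p q then - c * cind (p + Rmin th ((q - p)/2)) (q - Rmin th ((q - p)/2)) x else 0)
  else - c * oind (p - th) (q + th) x.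

Definition vh (c p q th a b : R) : R :=
  if Rlt_dec c 0 then (if Rlt_dec p q then - c * (clampv a b (q - Rmin th ((q - p)/2)) - clampv a b (p + Rmin th ((q - p)/2))) else 0)
  else - c * (clampv a b (q + th) - clampv a b (p - th)).

Lemma Rmin_facts th d : 0 < th -> 0 < d -> 0 < Rmin th d /\ Rmin th d <= th /\ Rmin th d <= d.
Proof. intros; unfold Rmin; destruct Rle_dec; lra. Qed.

Lemma hterm_le_ind c p q th x : 0 < th -> hterm c p q th x <= - c * ind p q x.
Proof. intros Hth. unfold hterm, ind, cind, oind.
 destruct (Rlt_dec c 0); [destruct (Rlt_dec p q)|].
 - destruct (Rmin_facts th ((q-p)/2) Hth ltac:(lra)) as (m1 & m2 & m3).
   repeat first [destruct Rle_dec | destruct Rlt_dec]; nra.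
 - repeat first [destruct Rle_dec | destruct Rlt_dec]; nra.
 - repeat first [destruct Rle_dec | destruct Rlt_dec]; nra. Qed.

Lemma hterm_le_abs c p q th x : hterm c p q th x <= Rabs c.
Proof. unfold hterm, cind, oind. unfold Rabs.
 repeat first [destruct Rle_dec | destruct Rlt_dec | destruct Rcase_abs]. all: nra. Qed.

Lemma locge_hterm c p q th : locge (fun x => - hterm c p q th x).
Proof. unfold hterm. destruct (Rlt_dec c 0); [destruct (Rlt_dec p q)|].
 - apply locge_neg_cind; lra.
 - intro x; exists 1; split; [lra|]; intros; lra.
 - apply locge_neg_oind; lra. Qed.

Lemma RI_zero a b : is_RInt (fun _ => 0) a b 0.
Proof. pose proof (RI_const a b 0) as H0; rewrite Rmult_0_r in H0; exact H0. Qed.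

Lemma RI_hterm c p q th a b : a <= b -> p <= q -> 0 < th -> is_RInt (hterm c p q th) a b (vh c p q th a b).
Proof. intros Hab Hpq Hth. unfold hterm, vh. destruct (Rlt_dec c 0); [destruct (Rlt_dec p q)|].
 - apply RI_scal, cind_RI; auto. destruct (Rmin_facts th ((q-p)/2) Hth ltac:(lra)) as (m1 & m2 & m3). lra.
 - apply RI_zero.
 - apply RI_scal, oind_RI; auto; lra. Qed.

Lemma vh_ge c p q th a b : a <= p -> p <= q -> q <= b -> 0 < th ->
  - c * (q - p) - 2 * th * Rabs c <= vh c p q th a b.
Proof. intros Hap Hpq Hqb Hth. unfold vh. destruct (Rlt_dec c 0); [destruct (Rlt_dec p q)|].
 - destruct (Rmin_facts th ((q-p)/2) Hth ltac:(lra)) as (m1 & m2 & m3).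
   rewrite clamp_eq by lra. rewrite Rabs_left by lra. nra.
 - rewrite Rabs_left by lra. nra.
 - pose proof (clamp_le a b (p - th) (q + th) ltac:(lra) ltac:(lra)). rewrite Rabs_right by lra. nra. Qed.

Lemma ind_le_oind p q x : ind p q x <= oind (p - (q - p)) q x.
Proof. unfold ind, oind. repeat first [destruct Rle_dec | destruct Rlt_dec]; lra. Qed.

Lemma ind_bounds p q x : 0 <= ind p q x <= 1.
Proof. unfold ind. repeat first [destruct Rle_dec | destruct Rlt_dec]; lra. Qed.
Lemma oind_bounds p q x : 0 <= oind p q x <= 1.
Proof. unfold oind. repeat first [destruct Rle_dec | destruct Rlt_dec]; lra. Qed.

Lemma conv_le_ev f S N B : conv f S -> (forall K, (N <= K)%nat -> fsum K f <= B) -> S <= B.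
Proof. intros H HB. destruct (Rle_dec S B) as [|n]; auto. exfalso.
 destruct (H (S - B)) as [N' HN]; [lra|]. specialize (HN (N + N')%nat ltac:(lia)). specialize (HB (N + N')%nat ltac:(lia)).
 apply Rabs_def2 in HN. lra. Qed.

Lemma integral_nonneg a b f I : a < b -> has_integral a b f I -> ae a b (fun x => 0 <= f x) -> 0 <= I.
Proof.
 intros Hab (c & p & q & Hb & [SA HSA] & HI & Hrep) Hpos.
 apply inf_conv in HSA. apply inf_conv in HI.
 destruct (Rle_dec 0 I) as [|nI]; auto. exfalso.
 set (dl := - I). assert (Edl : dl = - I) by reflexivity. assert (Hdl : 0 < dl) by lra. clearbody dl.
 pose proof (ae_and _ _ _ _ Hrep Hpos) as Hae.
 destruct (HSA (dl/8)) as [N1 HN1]; [lra|]. destruct (HI (dl/8)) as [N2 HN2]; [lra|].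
 set (N := (N1 + N2)%nat).
 set (B0 := fsum N (fun k => Rabs (c k))).
 assert (HB0 : 0 <= B0) by (apply fsum_nonneg; intro; apply Rabs_pos).
 set (th := dl / (16 * (B0 + 1))).
 assert (Hth : 0 < th) by (unfold th; apply Rdiv_lt_0_compat; lra).
 set (M := B0 + 1).
 set (epsE := dl / (4 * M)).
 destruct (Hae epsE) as (lE & rE & HE1 & HE2 & HE3). { unfold epsE, M; apply Rdiv_lt_0_compat; lra. }
 set (H := fun x => fsum N (fun k => hterm (c k) (p k) (q k) th x)).
 set (IH := fsum N (fun k => vh (c k) (p k) (q k) th a b)).
 set (e := dl / (8 * (b - a))).
 assert (He : 0 < e) by (unfold e; apply Rdiv_lt_0_compat; lra).
 assert (Hpart : fsum N (fun k => c k * (q k - p k)) <= - dl + dl/8).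
 { specialize (HN2 N ltac:(unfold N; lia)). apply Rabs_def2 in HN2. lra. }
 assert (HIH : 3 * dl / 4 <= IH).
 { assert (fsum N (fun k => - c k * (q k - p k) - 2 * th * Rabs (c k)) <= IH).
   { apply fsum_le; intros k _. destruct (Hb k) as (h1 & h2 & h3). apply vh_ge; auto. }
   rewrite (fsum_ext N _ (fun k => (-1) * (c k * (q k - p k)) + (- (2 * th)) * Rabs (c k))) in H0 by (intros; ring).
   rewrite fsum_plus, !fsum_scal in H0. fold B0 in H0.
   assert (2 * th * B0 <= dl / 8).
   { unfold th. apply (Rmult_le_reg_r (16 * (B0 + 1))); [lra|].
     replace (2 * (dl / (16 * (B0 + 1))) * B0 * (16 * (B0 + 1))) with (2 * dl * B0) by (field; lra). nra. }
   lra. }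
 assert (RH : is_RInt H a b IH).
 { apply (RI_fsum a b N (fun k => hterm (c k) (p k) (q k) th)). intro k. destruct (Hb k) as (h1 & h2 & h3).
   apply RI_hterm; lra. }
 assert (LH : locge (fun x => - H x)).
 { unfold H. intro x0. destruct (locge_fsum N (fun k x => - hterm (c k) (p k) (q k) th x)) with x0 as [t [Pt Ht]].
   { intro k; apply locge_hterm. }
   exists t; split; auto. intros y Hy. specialize (Ht y Hy).
   rewrite (fsum_ext N (fun k => - hterm (c k) (p k) (q k) th x0) (fun k => (-1) * hterm (c k) (p k) (q k) th x0)), fsum_scal in Ht by (intros; ring).
   rewrite (fsum_ext N (fun k => - hterm (c k) (p k) (q k) th y) (fun k => (-1) * hterm (c k) (p k) (q k) th y)), fsum_scal in Ht by (intros; ring). lra. }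
 assert (Htail : forall K, fsum K (fun k => Rabs (c (N + k)%nat) * (q (N + k)%nat - p (N + k)%nat)) <= dl / 8).
 { intro K. pose proof (fsum_split N K (fun k => Rabs (c k) * (q k - p k))) as Sp.
   assert (Pa : forall k, 0 <= Rabs (c k) * (q k - p k)) by (intro k; destruct (Hb k) as (h1 & h2 & h3); pose proof (Rabs_pos (c k)); nra).
   pose proof (conv_nonneg_le _ _ (N + K) Pa HSA).
   specialize (HN1 N ltac:(unfold N; lia)). apply Rabs_def2 in HN1. lra. }
 pose proof (core a b
   (fun k => Rabs (c (N + k)%nat)) (fun k => p (N + k)%nat - (q (N + k)%nat - p (N + k)%nat)) (fun k => q (N + k)%nat)
   (fun _ => M) lE rE H IH (dl / 4) (dl / 4) e ltac:(lra)) as Core.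
 assert (Hnot : ~ (forall x, a <= x <= b -> exists K,
     H x - e < fsum K (fun k => Rabs (c (N + k)%nat) * oind (p (N + k)%nat - (q (N + k)%nat - p (N + k)%nat)) (q (N + k)%nat) x)
              + fsum K (fun k => M * oind (lE k) (rE k) x))).
 { intro Hy. assert (IH - e * (b - a) <= dl / 4 + dl / 4); [|].
   { apply Core; auto.
     - intro k; split; [apply Rabs_pos|]. destruct (Hb (N + k)%nat) as (h1 & h2 & h3); lra.
     - intro k; split; [unfold M; lra|auto].
     - intro K. cbv beta. pose proof (Htail K).
       rewrite (fsum_ext K (fun k => Rabs (c (N+k)%nat) * (q (N+k)%nat - (p (N+k)%nat - (q (N+k)%nat - p (N+k)%nat)))) (fun k => 2 * (Rabs (c (N + k)%nat) * (q (N + k)%nat - p (N + k)%nat)))) by (intros; ring).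
       rewrite fsum_scal. lra.
     - intro K. rewrite fsum_scal. unfold epsE in HE3.
       assert (fsum K (fun k => rE k - lE k) <= dl / (4 * M)).
       { destruct K; simpl; [apply Rlt_le, Rdiv_lt_0_compat; unfold M; lra|].
         rewrite <- fsum_succ, <- fsum_S. apply HE3. }
       apply (Rmult_le_compat_l M) in H0; [|unfold M; lra].
       replace (M * (dl / (4 * M))) with (dl / 4) in H0 by (field; unfold M; lra). lra. }
   replace (e * (b - a)) with (dl / 8) in H0 by (unfold e; field; lra). lra. }
 apply not_all_ex_not in Hnot. destruct Hnot as [x Hx].
 apply imply_to_and in Hx. destruct Hx as [Hxab Hx].
 assert (Hx' : forall K, fsum K (fun k => Rabs (c (N + k)%nat) * oind (p (N + k)%nat - (q (N + k)%nat - p (N + k)%nat)) (q (N + k)%nat) x)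
              + fsum K (fun k => M * oind (lE k) (rE k) x) <= H x - e).
 { intro K. apply Rnot_lt_le. intro L. apply Hx. exists K. exact L. }
 assert (G1pos : forall K, 0 <= fsum K (fun k => Rabs (c (N + k)%nat) * oind (p (N + k)%nat - (q (N + k)%nat - p (N + k)%nat)) (q (N + k)%nat) x)).
 { intro K; apply fsum_nonneg; intro k. pose proof (Rabs_pos (c (N+k)%nat)). pose proof (oind_bounds (p (N + k)%nat - (q (N + k)%nat - p (N + k)%nat)) (q (N + k)%nat) x). nra. }
 assert (G2pos : forall K, 0 <= fsum K (fun k => M * oind (lE k) (rE k) x)).
 { intro K; apply fsum_nonneg; intro k. pose proof (oind_bounds (lE k) (rE k) x). unfold M in *. nra. }
 assert (HHB : H x <= B0) by (unfold H, B0; apply fsum_le; intros; apply hterm_le_abs).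
 assert (HHh : H x <= - fsum N (fun k => c k * ind (p k) (q k) x)).
 { unfold H. assert (fsum N (fun k => hterm (c k) (p k) (q k) th x) <= fsum N (fun k => (-1) * (c k * ind (p k) (q k) x))).
   { apply fsum_le; intros. eapply Rle_trans; [apply hterm_le_ind; auto|]. lra. }
   rewrite fsum_scal in H0. lra. }
 assert (HP : ((exists S, infinite_sum (fun k => Rabs (c k) * ind (p k) (q k) x) S) -> infinite_sum (fun k => c k * ind (p k) (q k) x) (f x)) /\ 0 <= f x).
 { apply NNPP. intro np. destruct (HE2 x (conj Hxab np)) as [j Hj].
   assert (M <= fsum (S j) (fun k => M * oind (lE k) (rE k) x)).
   { rewrite fsum_succ. unfold oind at 2. destruct (Rlt_dec (lE j) x); [|lra]. destruct (Rlt_dec x (rE j)); [|lra].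
     specialize (G2pos j). lra. }
   specialize (Hx' (S j)). specialize (G1pos (S j)). unfold M in *. lra. }
 destruct HP as [Hrx Hfx].
 assert (Htx : forall m, fsum m (fun k => Rabs (c (N + k)%nat) * ind (p (N + k)%nat) (q (N + k)%nat) x) <= H x - e).
 { intro m. specialize (Hx' m). specialize (G2pos m).
   assert (fsum m (fun k => Rabs (c (N + k)%nat) * ind (p (N + k)%nat) (q (N + k)%nat) x) <=
           fsum m (fun k => Rabs (c (N + k)%nat) * oind (p (N + k)%nat - (q (N + k)%nat - p (N + k)%nat)) (q (N + k)%nat) x)).
   { apply fsum_le; intros k _. apply Rmult_le_compat_l; [apply Rabs_pos|apply ind_le_oind]. }
   lra. }
 assert (Habs : exists S, infinite_sum (fun k => Rabs (c k) * ind (p k) (q k) x) S).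
 { destruct (conv_bounded (fun k => Rabs (c k) * ind (p k) (q k) x) (B0 + (H x - e))) as [S HS].
   - intro k; pose proof (Rabs_pos (c k)); pose proof (ind_bounds (p k) (q k) x); nra.
   - intro K. eapply Rle_trans; [apply (fsum_mono K (N + K)); [|lia]|].
     + intro k; pose proof (Rabs_pos (c k)); pose proof (ind_bounds (p k) (q k) x); nra.
     + rewrite fsum_split. specialize (Htx K).
       assert (fsum N (fun k => Rabs (c k) * ind (p k) (q k) x) <= B0).
       { unfold B0; apply fsum_le; intros k _. pose proof (Rabs_pos (c k)); pose proof (ind_bounds (p k) (q k) x); nra. }
       lra.
   - exists S; apply inf_conv; auto. }
 specialize (Hrx Habs). apply inf_conv in Hrx.
 assert (f x <= - e).
 { apply (conv_le_ev _ _ N _ Hrx). intros K HK. replace K with (N + (K - N))%nat by lia.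
   rewrite fsum_split. specialize (Htx (K - N)%nat).
   assert (fsum (K - N) (fun k => c (N + k)%nat * ind (p (N + k)%nat) (q (N + k)%nat) x) <=
           fsum (K - N) (fun k => Rabs (c (N + k)%nat) * ind (p (N + k)%nat) (q (N + k)%nat) x)).
   { apply fsum_le; intros k _. pose proof (ind_bounds (p (N+k)%nat) (q (N+k)%nat) x). pose proof (Rle_abs (c (N+k)%nat)). nra. }
   lra. }
 lra.
Qed.

Lemma conv_inter_comp f g S : (forall k, 0 <= f k) -> (forall k, 0 <= g k) -> conv (inter f g) S ->
  (exists S1, conv f S1) /\ (exists S2, conv g S2).
Proof. intros Pf Pg H.
 assert (Pi : forall k, 0 <= inter f g k) by (intro k; unfold inter; destruct Nat.even; auto).
 split; [apply (conv_bounded f S)|apply (conv_bounded g S)]; auto; intro K.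
 - eapply Rle_trans; [apply (fsum_inter_ge_l f g K Pg)|]. apply conv_nonneg_le; auto.
 - eapply Rle_trans; [apply (fsum_inter_ge_r f g K Pf)|]. apply conv_nonneg_le; auto. Qed.

Lemma lin_rep al (c i : nat -> R) v :
  (forall k, 0 <= i k) ->
  (exists S, conv (fun k => Rabs (al * c k) * i k) S) ->
  ((exists S, conv (fun k => Rabs (c k) * i k) S) -> conv (fun k => c k * i k) v) ->
  conv (fun k => al * c k * i k) (al * v).
Proof. intros Pi [S HS] H. destruct (Req_dec al 0) as [->|nz].
 - rewrite Rmult_0_l. apply conv_zero; intro; ring.
 - apply (conv_ext (fun k => al * (c k * i k))); [intro; ring|]. apply conv_scal. apply H.
   exists (/ Rabs al * S). apply (conv_ext (fun k => / Rabs al * (Rabs (al * c k) * i k))).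
   + intro k. rewrite Rabs_mult. field. apply Rabs_no_R0; auto.
   + apply conv_scal; auto. Qed.

Lemma inter_abs_ind (c1 c2 p1 p2 q1 q2 : nat -> R) x k :
  Rabs (inter c1 c2 k) * ind (inter p1 p2 k) (inter q1 q2 k) x =
  inter (fun k => Rabs (c1 k) * ind (p1 k) (q1 k) x) (fun k => Rabs (c2 k) * ind (p2 k) (q2 k) x) k.
Proof. unfold inter; destruct Nat.even; auto. Qed.
Lemma inter_ind (c1 c2 p1 p2 q1 q2 : nat -> R) x k :
  inter c1 c2 k * ind (inter p1 p2 k) (inter q1 q2 k) x =
  inter (fun k => c1 k * ind (p1 k) (q1 k) x) (fun k => c2 k * ind (p2 k) (q2 k) x) k.
Proof. unfold inter; destruct Nat.even; auto. Qed.
Lemma inter_abs_len (c1 c2 p1 p2 q1 q2 : nat -> R) k :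
  Rabs (inter c1 c2 k) * (inter q1 q2 k - inter p1 p2 k) =
  inter (fun k => Rabs (c1 k) * (q1 k - p1 k)) (fun k => Rabs (c2 k) * (q2 k - p2 k)) k.
Proof. unfold inter; destruct Nat.even; auto. Qed.
Lemma inter_len (c1 c2 p1 p2 q1 q2 : nat -> R) k :
  inter c1 c2 k * (inter q1 q2 k - inter p1 p2 k) =
  inter (fun k => c1 k * (q1 k - p1 k)) (fun k => c2 k * (q2 k - p2 k)) k.
Proof. unfold inter; destruct Nat.even; auto. Qed.

Lemma ind_nonneg p q x : 0 <= ind p q x.
Proof. unfold ind; repeat destruct Rle_dec; repeat destruct Rlt_dec; lra. Qed.

Lemma abs_ind_nonneg c p q x : 0 <= Rabs c * ind p q x.
Proof. pose proof (Rabs_pos c); pose proof (ind_nonneg p q x); nra. Qed.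
Lemma abs_len_nonneg c p q : p <= q -> 0 <= Rabs c * (q - p).
Proof. intros; pose proof (Rabs_pos c); nra. Qed.

Lemma has_integral_inter a b (f1 f2 : R -> R) I1 I2 (E : R -> Prop) (g : R -> R) (c1 p1 q1 c2 p2 q2 : nat -> R) :
  (forall k, a <= p1 k /\ p1 k <= q1 k /\ q1 k <= b) ->
  (forall k, a <= p2 k /\ p2 k <= q2 k /\ q2 k <= b) ->
  (exists S, conv (fun k => Rabs (c1 k) * (q1 k - p1 k)) S) ->
  (exists S, conv (fun k => Rabs (c2 k) * (q2 k - p2 k)) S) ->
  conv (fun k => c1 k * (q1 k - p1 k)) I1 ->
  conv (fun k => c2 k * (q2 k - p2 k)) I2 ->
  null E ->
  (forall x, a <= x <= b -> ~ E x ->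
     (exists S, conv (fun k => Rabs (c1 k) * ind (p1 k) (q1 k) x) S) ->
     (exists S, conv (fun k => Rabs (c2 k) * ind (p2 k) (q2 k) x) S) ->
     exists v1 v2, conv (fun k => c1 k * ind (p1 k) (q1 k) x) v1 /\
                   conv (fun k => c2 k * ind (p2 k) (q2 k) x) v2 /\ g x = v1 + v2) ->
  has_integral a b g (I1 + I2).
Proof. intros B1 B2 [S1 A1] [S2 A2] C1 C2 NE Hx.
 exists (inter c1 c2), (inter p1 p2), (inter q1 q2). split; [|split; [|split]].
 - intro k; unfold inter; destruct Nat.even; auto.
 - exists (S1 + S2). apply inf_conv. eapply conv_ext; [intro k; symmetry; apply inter_abs_len|]. apply conv_inter; auto.
 - apply inf_conv. eapply conv_ext; [intro k; symmetry; apply inter_len|]. apply conv_inter; auto.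
 - eapply null_subset; [|exact NE]. intros x [Hxab Hn]. apply NNPP; intro nE. apply Hn.
   intros [S HS]. apply inf_conv in HS. apply inf_conv.
   eapply conv_ext in HS; [|intro k; apply inter_abs_ind].
   destruct (conv_inter_comp _ _ _ (fun k => abs_ind_nonneg (c1 k) (p1 k) (q1 k) x) (fun k => abs_ind_nonneg (c2 k) (p2 k) (q2 k) x) HS) as [H1 H2].
   destruct (Hx x Hxab nE H1 H2) as (v1 & v2 & V1 & V2 & Eg). rewrite Eg.
   eapply conv_ext; [intro k; symmetry; apply inter_ind|]. apply conv_inter; auto. Qed.

Lemma has_integral_lin a b f g I J al be :
  has_integral a b f I -> has_integral a b g J ->
  has_integral a b (fun x => al * f x + be * g x) (al * I + be * J).
Proof. intros (c1 & p1 & q1 & B1 & [S1 A1] & C1 & R1) (c2 & p2 & q2 & B2 & [S2 A2] & C2 & R2).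
 apply inf_conv in A1, A2, C1, C2.
 apply (has_integral_inter a b f g _ _ (fun x => a <= x <= b /\ ~ ((
   (exists S, infinite_sum (fun k => Rabs (c1 k) * ind (p1 k) (q1 k) x) S) -> infinite_sum (fun k => c1 k * ind (p1 k) (q1 k) x) (f x)) /\
   ((exists S, infinite_sum (fun k => Rabs (c2 k) * ind (p2 k) (q2 k) x) S) -> infinite_sum (fun k => c2 k * ind (p2 k) (q2 k) x) (g x))))
   _ (fun k => al * c1 k) p1 q1 (fun k => be * c2 k) p2 q2); auto.
 - exists (Rabs al * S1). eapply conv_ext; [|apply (conv_scal (Rabs al)); exact A1]. intro k; simpl; rewrite Rabs_mult; ring.
 - exists (Rabs be * S2). eapply conv_ext; [|apply (conv_scal (Rabs be)); exact A2]. intro k; simpl; rewrite Rabs_mult; ring.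
 - eapply conv_ext; [|apply (conv_scal al); exact C1]. intro k; simpl; ring.
 - eapply conv_ext; [|apply (conv_scal be); exact C2]. intro k; simpl; ring.
 - exact (ae_and _ _ _ _ R1 R2).
 - intros x Hxab nE H1 H2. assert (HH : ((exists S, infinite_sum (fun k => Rabs (c1 k) * ind (p1 k) (q1 k) x) S) -> infinite_sum (fun k => c1 k * ind (p1 k) (q1 k) x) (f x)) /\
   ((exists S, infinite_sum (fun k => Rabs (c2 k) * ind (p2 k) (q2 k) x) S) -> infinite_sum (fun k => c2 k * ind (p2 k) (q2 k) x) (g x))).
   { apply NNPP; intro n; apply nE; auto. }
   destruct HH as [HH1 HH2].
   exists (al * f x), (be * g x). split; [|split; [|auto]].
   + apply (lin_rep al c1 (fun k => ind (p1 k) (q1 k) x)); auto. intro; apply ind_nonneg.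
     intros [S HS]. apply inf_conv, HH1. exists S; apply inf_conv; auto.
   + apply (lin_rep be c2 (fun k => ind (p2 k) (q2 k) x)); auto. intro; apply ind_nonneg.
     intros [S HS]. apply inf_conv, HH2. exists S; apply inf_conv; auto. Qed.

Definition extg (T e : R) (s : R -> R) (t : R) : R := if Rle_dec t T then s t else e * s (2 * T - t).

Lemma ind_refl T p q x : 2 * T - x <> p -> 2 * T - x <> q -> ind (2 * T - q) (2 * T - p) x = ind p q (2 * T - x).
Proof. intros. unfold ind. repeat destruct Rle_dec; repeat destruct Rlt_dec; lra. Qed.

Lemma L1_ext T e s : 0 < T -> L1 0 T s -> L1 0 (2 * T) (extg T e s).
Proof. intros HT [I (c & p & q & B & [SA A] & C & Rp)]. apply inf_conv in A, C.
 exists (I + e * I).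
 apply (has_integral_inter 0 (2 * T) s s I (e * I)
   (fun x => x = T \/ ((0 <= x <= T /\ ~ ((exists S, infinite_sum (fun k => Rabs (c k) * ind (p k) (q k) x) S) -> infinite_sum (fun k => c k * ind (p k) (q k) x) (s x)))
     \/ ((0 <= 2 * T - x <= T /\ ~ ((exists S, infinite_sum (fun k => Rabs (c k) * ind (p k) (q k) (2 * T - x)) S) -> infinite_sum (fun k => c k * ind (p k) (q k) (2 * T - x)) (s (2 * T - x))))
     \/ ((exists k, x = 2 * T - p k) \/ (exists k, x = 2 * T - q k)))))
   _ c p q (fun k => e * c k) (fun k => 2 * T - q k) (fun k => 2 * T - p k)).
 - intro k; destruct (B k); lra.
 - intro k; destruct (B k); lra.
 - exists SA; auto.
 - exists (Rabs e * SA). eapply conv_ext; [|apply (conv_scal (Rabs e)); exact A]. intro k; rewrite Rabs_mult; ring.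
 - auto.
 - eapply conv_ext; [|apply (conv_scal e); exact C]. intro k; simpl; ring.
 - apply null_union; [apply (null_subset _ (fun x => exists k : nat, x = (fun _ => T) k)); [intros x ->; exists O; auto|apply null_seq]|].
   apply null_union; [exact Rp|]. apply null_union; [apply (null_reflect _ (2 * T) Rp)|].
   apply null_union; [apply (null_subset _ (fun x => exists k, x = (fun k => 2 * T - p k) k)); [auto|apply null_seq]|].
   apply (null_subset _ (fun x => exists k, x = (fun k => 2 * T - q k) k)); [auto|apply null_seq].
 - intros x Hx nE H1 H2. unfold extg. destruct (Rle_dec x T) as [xT|xT].
   + assert (xT' : x < T) by (destruct (Req_dec x T); [exfalso; apply nE; left; auto|lra]).
     exists (s x), 0. split; [|split; [|ring]].
     * apply inf_conv. assert (HH : (exists S, infinite_sum (fun k => Rabs (c k) * ind (p k) (q k) x) S) -> infinite_sum (fun k => c k * ind (p k) (q k) x) (s x)).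
       { apply NNPP; intro n; apply nE; right; left; split; [lra|auto]. }
       apply HH. destruct H1 as [S HS]; exists S; apply inf_conv; auto.
     * apply conv_zero. intro k. destruct (B k). unfold ind. destruct Rle_dec; [lra|ring].
   + exists 0, (e * s (2 * T - x)). split; [|split; [|ring]].
     * apply conv_zero. intro k. destruct (B k). unfold ind. destruct Rle_dec; [|ring]. destruct Rlt_dec; [lra|ring].
     * assert (Hp : forall k, 2 * T - x <> p k) by (intros k E; apply nE; right; right; right; left; exists k; lra).
       assert (Hq : forall k, 2 * T - x <> q k) by (intros k E; apply nE; right; right; right; right; exists k; lra).
       apply (conv_ext (fun k => e * c k * ind (p k) (q k) (2 * T - x))); [intro k; rewrite ind_refl; auto|].
       apply lin_rep; [intro; apply ind_nonneg| |].
       { destruct H2 as [S HS]; exists S. eapply conv_ext; [|exact HS]. intro k; simpl; rewrite ind_refl; auto. }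
       intros [S HS]. assert (HH : (exists S, infinite_sum (fun k => Rabs (c k) * ind (p k) (q k) (2 * T - x)) S) -> infinite_sum (fun k => c k * ind (p k) (q k) (2 * T - x)) (s (2 * T - x))).
       { apply NNPP; intro n; apply nE; right; right; left; split; [lra|auto]. }
       apply inf_conv, HH. exists S; apply inf_conv; auto.
 Qed.

Lemma has_integral_opp a b f I : has_integral a b f I -> has_integral a b (fun x => - f x) (- I).
Proof. intros H. pose proof (has_integral_lin a b f f I I (-1) 0 H H) as H'.
 destruct H' as (c & p & q & H1 & H2 & H3 & H4). exists c, p, q; repeat split; auto; try apply H1.
 - replace (- I) with (-1 * I + 0 * I) by ring; auto.
 - eapply ae_mono; [exact H4|]. intros x _ Hx Hs. replace (- f x) with (-1 * f x + 0 * f x) by ring. auto. Qed.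

Lemma abs_unit s : s * s = 1 -> Rabs s = 1.
Proof. intros H. destruct (Rle_dec 0 s). rewrite Rabs_right by lra. nra. rewrite Rabs_left by lra. nra. Qed.

Lemma dw_left T f g x l : 0 <= x < T -> deriv_within 0 T f x l -> (forall y, y <= T -> g y = f y) ->
  deriv_within 0 (2 * T) g x l.
Proof. intros Hx D E eps He. destruct (D eps He) as [d [Hd H]]. exists (Rmin d (T - x)); split.
 { apply Rmin_glb_lt; lra. } intros y Hy Hyx Hyd.
 assert (Rabs (y - x) < d) by (eapply Rlt_le_trans; [exact Hyd|apply Rmin_l]).
 assert (Rabs (y - x) < T - x) by (eapply Rlt_le_trans; [exact Hyd|apply Rmin_r]).
 apply Rabs_def2 in H1. rewrite !E by lra. apply H; auto; lra. Qed.

Lemma dw_right T f g x l s : s * s = 1 -> T < x <= 2 * T -> deriv_within 0 T f (2 * T - x) l ->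
  (forall y, T < y -> g y = s * f (2 * T - y)) -> deriv_within 0 (2 * T) g x (- s * l).
Proof. intros Hs Hx D E eps He. destruct (D eps He) as [d [Hd H]]. exists (Rmin d (x - T)); split.
 { apply Rmin_glb_lt; lra. } intros y Hy Hyx Hyd.
 assert (Rabs (y - x) < d) by (eapply Rlt_le_trans; [exact Hyd|apply Rmin_l]).
 assert (Rabs (y - x) < x - T) by (eapply Rlt_le_trans; [exact Hyd|apply Rmin_r]).
 pose proof H1 as H1'. apply Rabs_def2 in H1. rewrite !E by lra.
 specialize (H (2 * T - y) ltac:(lra) ltac:(lra)).
 replace (2 * T - y - (2 * T - x)) with (- (y - x)) in H by ring. rewrite Rabs_Ropp in H. specialize (H H0).
 replace ((s * f (2 * T - y) - s * f (2 * T - x)) / (y - x) - - s * l)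
   with (- s * ((f (2 * T - y) - f (2 * T - x)) / - (y - x) - l)) by (field; lra).
 rewrite Rabs_mult, Rabs_Ropp, abs_unit by auto. lra. Qed.

Lemma dw_mid T f g l s : 0 < T -> s * s = 1 -> deriv_within 0 T f T l ->
  (forall y, y <= T -> g y = f y) -> (forall y, T < y -> g y = s * f (2 * T - y)) ->
  f T = s * f T -> l = - s * l -> deriv_within 0 (2 * T) g T l.
Proof. intros HT Hs D E1 E2 F L eps He. destruct (D eps He) as [d [Hd H]]. exists d; split; auto.
 intros y Hy Hyx Hyd. destruct (Rle_dec y T).
 - rewrite !E1 by lra. apply H; auto; lra.
 - rewrite E2 by lra. rewrite E1 by lra.
   specialize (H (2 * T - y) ltac:(lra) ltac:(lra)).
   replace (2 * T - y - T) with (- (y - T)) in H by ring. rewrite Rabs_Ropp in H. specialize (H Hyd).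
   replace ((s * f (2 * T - y) - f T) / (y - T) - l) with (- s * ((f (2 * T - y) - f T) / - (y - T) - l)).
   + rewrite Rabs_mult, Rabs_Ropp, abs_unit by auto. lra.
   + symmetry. assert (E4 : - l = s * l) by nra.
     transitivity ((s * f (2 * T - y) - s * f T) / (y - T) + s * l); [|field; lra].
     rewrite <- F. lra. Qed.

Lemma sum_rev F N : sum_f_R0 (fun k => F (N - k)%nat) N = sum_f_R0 F N.
Proof. revert F. induction N; intro F. simpl; auto.
 rewrite decomp_sum by lia. simpl pred.
 rewrite (sum_eq _ (fun i => F (N - i)%nat)) by (intros; f_equal; lia).
 rewrite IHN. replace (S N - 0)%nat with (S N) by lia. simpl (sum_f_R0 F (S N)). ring. Qed.

Lemma abs_cont_glue T f g s : 0 < T -> s * s = 1 -> abs_cont 0 T f ->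
  (forall y, y <= T -> g y = f y) -> (forall y, T < y -> g y = s * f (2 * T - y)) ->
  f T = s * f T -> abs_cont 0 (2 * T) g.
Proof. intros HT Hs AC E1 E2 F eps He. destruct (AC (eps / 2)) as [d [Hd H]]; [lra|].
 exists d; split; auto. intros N x y Hxy Hord Hsum.
 assert (Gz : forall z, g z = f (Rmin z T) + s * f (2 * T - Rmax z T) - s * f T).
 { intro z. unfold Rmin, Rmax. destruct (Rle_dec z T).
   - rewrite E1 by lra. replace (2 * T - T) with T by ring. ring.
   - rewrite E2 by lra. lra. }
 assert (L : sum_f_R0 (fun k => Rabs (f (Rmin (y k) T) - f (Rmin (x k) T))) N < eps / 2).
 { apply H.
   - intros k Hk; destruct (Hxy k Hk) as (h1 & h2 & h3); unfold Rmin; repeat destruct Rle_dec; lra.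
   - intros i j Hij; specialize (Hord i j Hij); unfold Rmin; repeat destruct Rle_dec; lra.
   - eapply Rle_lt_trans; [|exact Hsum]. apply sum_Rle; intros k Hk.
     destruct (Hxy k Hk) as (h1 & h2 & h3); unfold Rmin; repeat destruct Rle_dec; lra. }
 assert (Rr : sum_f_R0 (fun k => Rabs (f (2 * T - Rmax (x (N - k)%nat) T) - f (2 * T - Rmax (y (N - k)%nat) T))) N < eps / 2).
 { apply (H N (fun k => 2 * T - Rmax (y (N - k)%nat) T) (fun k => 2 * T - Rmax (x (N - k)%nat) T)).
   - intros k Hk; destruct (Hxy (N - k)%nat ltac:(lia)) as (h1 & h2 & h3); unfold Rmax; repeat destruct Rle_dec; lra.
   - intros i j Hij; specialize (Hord (N - j)%nat (N - i)%nat ltac:(lia)); unfold Rmax; repeat destruct Rle_dec; lra.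
   - rewrite (sum_rev (fun k => (2 * T - Rmax (x k) T) - (2 * T - Rmax (y k) T)) N).
     eapply Rle_lt_trans; [|exact Hsum]. apply sum_Rle; intros k Hk.
     destruct (Hxy k Hk) as (h1 & h2 & h3); unfold Rmax; repeat destruct Rle_dec; lra. }
 rewrite (sum_rev (fun k => Rabs (f (2 * T - Rmax (x k) T) - f (2 * T - Rmax (y k) T))) N) in Rr.
 eapply Rle_lt_trans with (sum_f_R0 (fun k => Rabs (f (Rmin (y k) T) - f (Rmin (x k) T))) N +
    sum_f_R0 (fun k => Rabs (f (2 * T - Rmax (x k) T) - f (2 * T - Rmax (y k) T))) N); [|lra].
 rewrite <- plus_sum. apply sum_Rle; intros k _. rewrite !Gz.
 replace (f (Rmin (y k) T) + s * f (2 * T - Rmax (y k) T) - s * f T - (f (Rmin (x k) T) + s * f (2 * T - Rmax (x k) T) - s * f T))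
   with ((f (Rmin (y k) T) - f (Rmin (x k) T)) + (- s) * (f (2 * T - Rmax (x k) T) - f (2 * T - Rmax (y k) T))) by ring.
 eapply Rle_trans; [apply Rabs_triang|]. rewrite Rabs_mult, Rabs_Ropp, (abs_unit s Hs). lra. Qed.

Lemma small_coef al eps : 0 < eps -> 0 < eps / (2 * (Rabs al + 1)) /\ Rabs al * (eps / (2 * (Rabs al + 1))) <= eps / 2.
Proof. intros He. pose proof (Rabs_pos al). split. apply Rdiv_lt_0_compat; lra.
 apply (Rmult_le_reg_r (2 * (Rabs al + 1))); [lra|].
 replace (Rabs al * (eps / (2 * (Rabs al + 1))) * (2 * (Rabs al + 1))) with (Rabs al * eps) by (field; lra). nra. Qed.

Lemma dw_lin a b f g x l m al be : deriv_within a b f x l -> deriv_within a b g x m ->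
  deriv_within a b (fun y => al * f y + be * g y) x (al * l + be * m).
Proof. intros Df Dg eps He. destruct (small_coef al eps He) as [P1 Q1]. destruct (small_coef be eps He) as [P2 Q2].
 destruct (Df _ P1) as [d1 [Hd1 H1]]. destruct (Dg _ P2) as [d2 [Hd2 H2]].
 exists (Rmin d1 d2); split; [apply Rmin_glb_lt; auto|]. intros y Hy Hyx Hyd.
 assert (Rabs (y - x) < d1) by (eapply Rlt_le_trans; [exact Hyd|apply Rmin_l]).
 assert (Rabs (y - x) < d2) by (eapply Rlt_le_trans; [exact Hyd|apply Rmin_r]).
 specialize (H1 y Hy Hyx H). specialize (H2 y Hy Hyx H0).
 replace ((al * f y + be * g y - (al * f x + be * g x)) / (y - x) - (al * l + be * m))
   with (al * ((f y - f x) / (y - x) - l) + be * ((g y - g x) / (y - x) - m)) by (field; intro; apply Hyx; lra).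
 eapply Rle_lt_trans; [apply Rabs_triang|]. rewrite !Rabs_mult.
 pose proof (Rabs_pos al). pose proof (Rabs_pos be).
 assert (Rabs al * Rabs ((f y - f x) / (y - x) - l) <= Rabs al * (eps / (2 * (Rabs al + 1)))) by (apply Rmult_le_compat_l; lra).
 assert (Rabs be * Rabs ((g y - g x) / (y - x) - m) <= Rabs be * (eps / (2 * (Rabs be + 1)))) by (apply Rmult_le_compat_l; lra).
 assert (Rabs al * Rabs ((f y - f x) / (y - x) - l) + Rabs be * Rabs ((g y - g x) / (y - x) - m) <= eps / 2 + eps / 2) by lra.
 destruct (Rle_lt_or_eq_dec 0 (Rabs al)) as [pa|za]; auto; destruct (Rle_lt_or_eq_dec 0 (Rabs be)) as [pb|zb]; auto.
 - assert (Rabs al * Rabs ((f y - f x) / (y - x) - l) < Rabs al * (eps / (2 * (Rabs al + 1)))) by (apply Rmult_lt_compat_l; lra). lra.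
 - rewrite <- zb. assert (Rabs al * Rabs ((f y - f x) / (y - x) - l) < Rabs al * (eps / (2 * (Rabs al + 1)))) by (apply Rmult_lt_compat_l; lra). lra.
 - rewrite <- za. lra.
 - rewrite <- za, <- zb. lra. Qed.

Lemma ac_lin a b f g al be : abs_cont a b f -> abs_cont a b g -> abs_cont a b (fun y => al * f y + be * g y).
Proof. intros Af Ag eps He. destruct (small_coef al eps He) as [P1 Q1]. destruct (small_coef be eps He) as [P2 Q2].
 destruct (Af _ P1) as [d1 [Hd1 H1]]. destruct (Ag _ P2) as [d2 [Hd2 H2]].
 exists (Rmin d1 d2); split; [apply Rmin_glb_lt; auto|]. intros N x y Hxy Hord Hs.
 assert (sum_f_R0 (fun k => y k - x k) N < d1) by (eapply Rlt_le_trans; [exact Hs|apply Rmin_l]).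
 assert (sum_f_R0 (fun k => y k - x k) N < d2) by (eapply Rlt_le_trans; [exact Hs|apply Rmin_r]).
 specialize (H1 N x y Hxy Hord H). specialize (H2 N x y Hxy Hord H0).
 apply Rle_lt_trans with (Rabs al * sum_f_R0 (fun k => Rabs (f (y k) - f (x k))) N + Rabs be * sum_f_R0 (fun k => Rabs (g (y k) - g (x k))) N).
 - rewrite !scal_sum, <- plus_sum. apply sum_Rle; intros k _.
   replace (al * f (y k) + be * g (y k) - (al * f (x k) + be * g (x k))) with (al * (f (y k) - f (x k)) + be * (g (y k) - g (x k))) by ring.
   eapply Rle_trans; [apply Rabs_triang|]. rewrite !Rabs_mult. lra.
 - pose proof (Rabs_pos al). pose proof (Rabs_pos be).
   assert (Rabs al * sum_f_R0 (fun k => Rabs (f (y k) - f (x k))) N <= Rabs al * (eps / (2 * (Rabs al + 1)))) by (apply Rmult_le_compat_l; lra).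
   assert (Rabs be * sum_f_R0 (fun k => Rabs (g (y k) - g (x k))) N <= Rabs be * (eps / (2 * (Rabs be + 1)))) by (apply Rmult_le_compat_l; lra).
   destruct (Rle_lt_or_eq_dec 0 (Rabs al)) as [pa|za]; auto.
   + assert (Rabs al * sum_f_R0 (fun k => Rabs (f (y k) - f (x k))) N < Rabs al * (eps / (2 * (Rabs al + 1)))) by (apply Rmult_lt_compat_l; lra). lra.
   + rewrite <- za in *. lra. Qed.

Lemma is_sol_lin n a b c s1 s2 u1 u2 al be :
  is_sol n a b c (N_bc n a b) s1 u1 -> is_sol n a b c (N_bc n a b) s2 u2 ->
  is_sol n a b c (N_bc n a b) (fun t => al * s1 t + be * s2 t) (fun t => al * u1 t + be * u2 t).
Proof. intros (D1 & E1 & [W1 A1] & B1 & S1) (D2 & E2 & [W2 A2] & B2 & S2).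
 exists (fun k t => al * D1 k t + be * D2 k t). split; [|split; [split|split]].
 - intros x Hx; rewrite E1, E2; auto.
 - intros k x Hk Hx. apply dw_lin; auto.
 - apply ac_lin; auto.
 - intros k Hk. destruct (B1 k Hk), (B2 k Hk). split; [rewrite H, H1|rewrite H0, H2]; ring.
 - eapply ae_mono; [exact (ae_and _ _ _ _ S1 S2)|]. intros x Hx [[d1 [Hd1 Q1]] [d2 [Hd2 Q2]]].
   exists (al * d1 + be * d2). split; [apply dw_lin; auto|].
   rewrite (fsum_ext _ _ (fun k => al * (c k x * D1 k x) + be * (c k x * D2 k x))) by (intros; ring).
   rewrite fsum_plus, !fsum_scal. rewrite <- Q1, <- Q2. ring. Qed.

Lemma is_sol_sig n a b c bc s s' u : (forall t, s t = s' t) -> is_sol n a b c bc s u -> is_sol n a b c bc s' u.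
Proof. intros E (D & H1 & H2 & H3 & H4). exists D; repeat split; auto; try apply H2.
 eapply ae_mono; [exact H4|]. intros x _ [d [Hd Q]]; exists d; split; auto; rewrite <- E; auto. Qed.

Definition sg (e : R) (k : nat) : R := if Nat.even k then e else - e.
Definition Dext (T e : R) (D : nat -> R -> R) (k : nat) (t : R) : R :=
  if Rle_dec t T then D k t else sg e k * D k (2 * T - t).

Lemma sg_S e k : sg e (S k) = - sg e k.
Proof. unfold sg. rewrite Nat.even_succ, <- Nat.negb_even. destruct (Nat.even k); simpl; ring. Qed.
Lemma sg_sq e k : e * e = 1 -> sg e k * sg e k = 1.
Proof. unfold sg; destruct Nat.even; intros; lra. Qed.

Lemma is_sol_ext n T c bc s u e : 0 < T -> e * e = 1 -> (1 <= n)%nat ->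
  (forall D, bc D -> (forall k, (k < n)%nat -> D (2 * k + 1)%nat 0 = 0) /\ (forall k, (k < 2 * n)%nat -> D k T = sg e k * D k T)) ->
  is_sol n 0 T c bc s u -> is_sol n 0 (2 * T) (refl_coef T c) (N_bc n 0 (2 * T)) (extg T e s) (extg T e u).
Proof. intros HT He Hn Hbc (D & HD0 & [Hder Hac] & HB & Hsol). destruct (Hbc D HB) as [B0 BT].
 assert (Dle : forall k y, y <= T -> Dext T e D k y = D k y) by (intros; unfold Dext; destruct Rle_dec; [auto|lra]).
 assert (Dgt : forall k y, T < y -> Dext T e D k y = sg e k * D k (2 * T - y)) by (intros; unfold Dext; destruct Rle_dec; [lra|auto]).
 assert (Hpred : Nat.even (pred (2 * n)) = false).
 { replace (pred (2 * n)) with (S (2 * (n - 1))) by lia. apply even_sdouble. }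
 exists (Dext T e D). split; [|split; [split|split]].
 - intros x Hx. unfold Dext, extg. destruct Rle_dec. apply HD0; lra. rewrite HD0 by lra. reflexivity.
 - intros k x Hk Hx. destruct (Rlt_le_dec x T) as [xT|xT]; [|destruct (Req_dec x T) as [xe|xne]].
   + rewrite Dle by lra. apply (dw_left T (D k)); auto. lra. apply Hder; auto; lra.
   + subst x. rewrite Dle by lra. apply (dw_mid T (D k) _ _ (sg e k)); auto.
     * apply sg_sq; auto.
     * apply Hder; auto; lra.
     * apply BT; lia.
     * rewrite <- sg_S. apply BT; auto.
   + rewrite Dgt by lra. rewrite sg_S. apply (dw_right T (D k) _ _ _ (sg e k)); auto.
     * apply sg_sq; auto.
     * lra.
     * apply Hder; auto; lra.
 - apply (abs_cont_glue T (D (pred (2 * n))) _ (sg e (pred (2 * n)))); auto.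
   apply sg_sq; auto. apply BT; lia.
 - intros k Hk. split.
   + rewrite Dle by lra. apply B0; auto.
   + rewrite Dgt by lra. replace (2 * T - 2 * T) with 0 by ring. rewrite B0 by auto. ring.
 - set (Q := fun t => exists d, deriv_within 0 T (D (pred (2 * n))) t d /\ d + fsum (2 * n) (fun k => c k t * D k t) = s t).
   eapply null_subset; [|apply (null_union _ _ (null_seq (fun _ => T))
       (null_union _ _ Hsol (null_reflect _ (2 * T) Hsol)))].
   intros x [Hx nQ]. apply NNPP; intro N. apply nQ.
   destruct (Req_dec x T) as [xe|xne]; [exfalso; apply N; left; exists O; auto|].
   destruct (Rle_dec x T) as [xT|xT].
   + assert (Qx : Q x) by (apply NNPP; intro nq; apply N; right; left; split; [lra|auto]).
     destruct Qx as [d [Hd Hq]]. exists d. split.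
     * apply (dw_left T (D (pred (2 * n)))); auto; lra.
     * rewrite (fsum_ext _ _ (fun k => c k x * D k x)).
       { unfold extg; destruct Rle_dec; [auto|lra]. }
       intros k _. unfold refl_coef. destruct Rle_dec; [|lra]. rewrite Dle; auto.
   + assert (Qx : Q (2 * T - x)) by (apply NNPP; intro nq; apply N; right; right; split; [lra|auto]).
     destruct Qx as [d [Hd Hq]]. exists (e * d). split.
     * replace (e * d) with (- sg e (pred (2 * n)) * d) by (unfold sg; rewrite Hpred; ring).
       apply (dw_right T (D (pred (2 * n)))); auto. apply sg_sq; auto. lra.
     * rewrite (fsum_ext _ _ (fun k => e * (c k (2 * T - x) * D k (2 * T - x)))).
       { rewrite fsum_scal. unfold extg; destruct Rle_dec; [lra|]. rewrite <- Hq; ring. }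
       intros k _. unfold refl_coef. destruct Rle_dec; [lra|]. rewrite Dgt by lra. unfold sg.
       destruct (Nat.even k); ring.
Qed.

Lemma ae_ext T P : 0 < T -> ae 0 T P -> ae 0 (2 * T) (fun x => P (if Rle_dec x T then x else 2 * T - x)).
Proof. intros HT H. eapply null_subset; [|exact (null_union _ _ H (null_reflect _ (2 * T) H))].
 intros x [Hx nP]. destruct (Rle_dec x T); [left|right]; split; auto; lra. Qed.

Lemma bc_N n T : forall D, N_bc n 0 T D -> (forall k, (k < n)%nat -> D (2 * k + 1)%nat 0 = 0) /\ (forall k, (k < 2 * n)%nat -> D k T = sg 1 k * D k T).
Proof. intros D H. split. intros k Hk; apply (H k Hk).
 intros k Hk. destruct (Nat.Even_or_Odd k) as [[j ->]|[j ->]].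
 - unfold sg; rewrite even_double; ring.
 - rewrite (proj2 (H j ltac:(lia))). ring. Qed.

Lemma bc_M n T : forall D, M1_bc n 0 T D -> (forall k, (k < n)%nat -> D (2 * k + 1)%nat 0 = 0) /\ (forall k, (k < 2 * n)%nat -> D k T = sg (-1) k * D k T).
Proof. intros D H. split. intros k Hk; apply (H k Hk).
 intros k Hk. destruct (Nat.Even_or_Odd k) as [[j ->]|[j ->]].
 - rewrite (proj2 (H j ltac:(lia))). ring.
 - unfold sg. replace (2 * j + 1)%nat with (S (2 * j)) by lia. rewrite even_sdouble; ring. Qed.

Lemma comb (n : nat) (T : R) (c : nat -> R -> R) (hn : (1 <= n)%nat) (hT : 0 < T)
  (GN2 : R -> R -> R)
  (hGN2 : Green n 0 (2 * T) (refl_coef T c) (N_bc n 0 (2 * T)) GN2)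
  (s1 s2 uN uM : R -> R) (hs1 : L1 0 T s1) (hs2 : L1 0 T s2)
  (huN : is_sol n 0 T c (N_bc n 0 T) s1 uN)
  (huM : is_sol n 0 T c (M1_bc n 0 T) s2 uM) al be t :
  0 <= t <= T ->
  has_integral 0 (2 * T) (fun x => GN2 t x * (al * extg T 1 s1 x + be * extg T (-1) s2 x)) (al * uN t + be * uM t).
Proof. intros Ht. destruct hGN2 as [NR Hex].
 assert (L : L1 0 (2 * T) (fun x => al * extg T 1 s1 x + be * extg T (-1) s2 x)).
 { destruct (L1_ext T 1 s1 hT hs1) as [I1 H1]. destruct (L1_ext T (-1) s2 hT hs2) as [I2 H2].
   eexists; apply has_integral_lin; eauto. }
 destruct (Hex _ L) as [w [Hw Hrep]].
 pose proof (is_sol_ext n T c _ s1 uN 1 hT ltac:(lra) hn (bc_N n T) huN) as EN.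
 pose proof (is_sol_ext n T c _ s2 uM (-1) hT ltac:(lra) hn (bc_M n T) huM) as EM.
 pose proof (is_sol_lin _ _ _ _ _ _ _ _ al be EN EM) as Ec.
 pose proof (is_sol_lin _ _ _ _ _ _ _ _ 1 (-1) Hw Ec) as Ed.
 apply (is_sol_sig _ _ _ _ _ _ (fun _ => 0)) in Ed; [|intro; ring].
 specialize (NR _ Ed t ltac:(lra)). specialize (Hrep t ltac:(lra)).
 replace (al * uN t + be * uM t) with (w t).
 - exact Hrep.
 - unfold extg in NR. destruct Rle_dec; [|lra]. lra. Qed.

Theorem theorem6p4 (n : nat) (T al : R) (c : nat -> R -> R)
  (hn : (1 <= n)%nat) (hT : 0 < T) (hal : 1 <= al)
  (hc : forall k, (k < 2 * n)%nat -> Lp al 0 T (c k))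
  (GN2 : R -> R -> R)
  (hGN2 : Green n 0 (2 * T) (refl_coef T c) (N_bc n 0 (2 * T)) GN2)
  (hGN : exists G, Green n 0 T c (N_bc n 0 T) G)
  (hGM : exists G, Green n 0 T c (M1_bc n 0 T) G)
  (s1 s2 uN uM : R -> R)
  (hs1 : L1 0 T s1) (hs2 : L1 0 T s2)
  (huN : is_sol n 0 T c (N_bc n 0 T) s1 uN)
  (huM : is_sol n 0 T c (M1_bc n 0 T) s2 uM) :
  ((forall t s, 0 <= t <= 2 * T -> 0 <= s <= 2 * T -> 0 <= GN2 t s) ->
     ae 0 T (fun t => Rabs (s2 t) <= s1 t) ->
     forall t, 0 <= t <= T -> Rabs (uM t) <= uN t) /\
  ((forall t s, 0 <= t <= 2 * T -> 0 <= s <= 2 * T -> GN2 t s <= 0) ->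
     ae 0 T (fun t => 0 <= s2 t <= s1 t) ->
     forall t, 0 <= t <= T -> uN t <= 0 /\ uN t <= uM t) /\
  ((forall t s, 0 <= t <= 2 * T -> 0 <= s <= 2 * T -> GN2 t s <= 0) ->
     ae 0 T (fun t => s1 t <= s2 t <= 0) ->
     forall t, 0 <= t <= T -> 0 <= uN t /\ uM t <= uN t).
Proof.
 assert (Cb := comb n T c hn hT GN2 hGN2 s1 s2 uN uM hs1 hs2 huN huM).
 assert (Pos : forall a b t, 0 <= t <= T ->
   ae 0 (2 * T) (fun x => 0 <= GN2 t x * (a * extg T 1 s1 x + b * extg T (-1) s2 x)) -> 0 <= a * uN t + b * uM t).
 { intros a b t Ht H. eapply integral_nonneg; [|apply Cb; auto|exact H]. lra. }
 assert (Neg : forall a b t, 0 <= t <= T ->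
   ae 0 (2 * T) (fun x => GN2 t x * (a * extg T 1 s1 x + b * extg T (-1) s2 x) <= 0) -> a * uN t + b * uM t <= 0).
 { intros a b t Ht H. cut (0 <= - (a * uN t + b * uM t)); [lra|].
   eapply integral_nonneg; [|apply has_integral_opp, Cb; auto|]. lra.
   eapply ae_mono; [exact H|]. intros x _ Hx; lra. }
 split; [|split].
 - intros HG Hs t Ht.
   assert (A : forall b, b * b = 1 -> 0 <= 1 * uN t + b * uM t).
   { intros b Hb. apply Pos; auto. eapply ae_mono; [exact (ae_ext T _ hT Hs)|].
     intros x Hx Hp. specialize (HG t x ltac:(lra) Hx). unfold extg in *.
     destruct (Rle_dec x T); unfold Rabs in Hp; destruct Rcase_abs in Hp.
     all: apply Rmult_le_pos; auto; nra. }
   pose proof (A 1 ltac:(lra)). pose proof (A (-1) ltac:(lra)).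
   unfold Rabs; destruct Rcase_abs; lra.
 - intros HG Hs t Ht. split.
   + cut (1 * uN t + 0 * uM t <= 0); [lra|]. apply Neg; auto. eapply ae_mono; [exact (ae_ext T _ hT Hs)|].
     intros x Hx Hp. specialize (HG t x ltac:(lra) Hx). unfold extg in *.
     destruct (Rle_dec x T); nra.
   + cut (0 <= -1 * uN t + 1 * uM t); [lra|]. apply Pos; auto. eapply ae_mono; [exact (ae_ext T _ hT Hs)|].
     intros x Hx Hp. specialize (HG t x ltac:(lra) Hx). unfold extg in *.
     destruct (Rle_dec x T); nra.
 - intros HG Hs t Ht. split.
   + cut (0 <= 1 * uN t + 0 * uM t); [lra|]. apply Pos; auto. eapply ae_mono; [exact (ae_ext T _ hT Hs)|].
     intros x Hx Hp. specialize (HG t x ltac:(lra) Hx). unfold extg in *.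
     destruct (Rle_dec x T); nra.
   + cut (0 <= 1 * uN t + -1 * uM t); [lra|]. apply Pos; auto. eapply ae_mono; [exact (ae_ext T _ hT Hs)|].
     intros x Hx Hp. specialize (HG t x ltac:(lra) Hx). unfold extg in *.
     destruct (Rle_dec x T); nra.
Qed.
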